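(* Let $W\in\mathrm{Mat}(n,\mathbb{Z})$ be a P-admissible matrix and let $Q=(q_0,\ldots,q_n)$ be a reduced weights vector associated with $W$. Then: (a) $(\widehat W^T)^*_Q=W$; (b) if $s$ is the gcd of all entries of $\mathrm{Adj}(W)$ and $s_i$ is the gcd of the entries of the $i$-th row of $\mathrm{Adj}(W)$, then $q_0=|\det\widehat W|$, $q_i=s_i/s$ for $1\le i\le n$, and $\mathrm{lcm}(Q)=|\det W|/s$; (c) if $Q_1$ and $Q_2$ are reduced weights vectors associated with the same P-admissible matrix $W$, then $Q_1=Q_2$; (d) there exists a unique F-admissible matrix $V$ with $W=(V^0)^*_Q$ and $Q=(|V_0|,\ldots,|V_n|)$.
   Context: A weights vector is an $(n+1)$-tuple of positive integers with gcd $1$; it is reduced if $\gcd(q_i:i\neq j)=1$ for every $j$. For $V=(\mathbf{v}_0,\ldots,\mathbf{v}_n)\in\mathrm{Mat}(n,n+1;\mathbb{Z})$, $V_j$ is the determinant of $V$ with column $\mathbf{v}_j$ deleted and $V^0=(\mathbf{v}_1,\ldots,\mathbf{v}_n)$. $V$ is F-admissible if all $V_j\neq0$, $\gcd(V_0,\ldots,V_n)=1$ and $\sum_j|V_j|\mathbf{v}_j=0$. For $A\in\mathrm{GL}(n,\mathbb{Q})$, $A^*=(A^{-1})^T$. The weighted transverse of $V$ (all $V_j\ne0$) is $(V^0)^*_Q=(V^0)^*\cdot\delta\,\mathrm{diag}(1/|V_1|,\ldots,1/|V_n|)$, where $Q=(|V_0|,\ldots,|V_n|)$ and $\delta=\mathrm{lcm}(Q)$.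 A matrix $W\in\mathrm{Mat}(n,\mathbb{Z})$ is P-admissible if $W=(V^0)^*_Q$ for some F-admissible $V$ with $Q=(|V_0|,\ldots,|V_n|)$; then $Q,W,V$ are said to be associated. For $W\in\mathrm{GL}(n,\mathbb{Q})\cap\mathrm{Mat}(n,\mathbb{Z})$, $\mathrm{Adj}(W)=\det(W)W^{-1}$, $s_i$ is the gcd of the $i$-th row of $\mathrm{Adj}(W)$, and $\widehat W=\mathrm{diag}(|\det W|/s_1,\ldots,|\det W|/s_n)\cdot W^{-1}$. *)

(* Defs.v *)
From HB Require Import structures.
From mathcomp Require Import all_boot all_order all_algebra.
Set Implicit Arguments. Unset Strict Implicit. Unset Printing Implicit Defensive.
Import Order.TTheory GRing.Theory Num.Theory.
Local Open Scope ring_scope.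

Definition toQ {m k : nat} (A : 'M[int]_(m, k)) : 'M[rat]_(m, k) :=
  map_mx (fun z : int => z%:~R) A.

Definition tstar {n : nat} (A : 'M[rat]_n) : 'M[rat]_n := (invmx A)^T.

Definition weights_vector {n : nat} (Q : {ffun 'I_n.+1 -> nat}) : Prop :=
  (forall i, (0 < Q i)%N) /\ \big[gcdn/0%N]_i Q i = 1%N.

Definition reduced_weights_vector {n : nat} (Q : {ffun 'I_n.+1 -> nat}) : Prop :=
  weights_vector Q /\ forall j : 'I_n.+1, \big[gcdn/0%N]_(i | i != j) Q i = 1%N.

Definition lcmQ {n : nat} (Q : {ffun 'I_n.+1 -> nat}) : nat := \big[lcmn/1%N]_i Q i.

Definition transverseQ {n : nat} (A : 'M[rat]_n) (Q : {ffun 'I_n.+1 -> nat}) : 'M[rat]_n :=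
  tstar A *m ((lcmQ Q)%:R *: diag_mx (\row_i ((Q (lift ord0 i))%:R)^-1)).

Definition Vminor {n : nat} (V : 'M[int]_(n, n.+1)) (j : 'I_n.+1) : int :=
  \det (col' j V).

Definition V0 {n : nat} (V : 'M[int]_(n, n.+1)) : 'M[int]_n := col' ord0 V.

Definition Fadmissible {n : nat} (V : 'M[int]_(n, n.+1)) : Prop :=
  (forall j, Vminor V j != 0) /\
  \big[gcdz/0]_j Vminor V j = 1 /\
  \sum_j `|Vminor V j| *: col j V = 0.

Definition weightsOf {n : nat} (V : 'M[int]_(n, n.+1)) : {ffun 'I_n.+1 -> nat} :=
  [ffun j => `|Vminor V j|%N].

Definition wtransverse {n : nat} (V : 'M[int]_(n, n.+1)) : 'M[rat]_n :=
  transverseQ (toQ (V0 V)) (weightsOf V).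

Definition associated {n : nat} (Q : {ffun 'I_n.+1 -> nat}) (W : 'M[int]_n)
  (V : 'M[int]_(n, n.+1)) : Prop :=
  Fadmissible V /\ Q = weightsOf V /\ toQ W = wtransverse V.

Definition Padmissible {n : nat} (W : 'M[int]_n) : Prop :=
  exists V : 'M[int]_(n, n.+1), Fadmissible V /\ toQ W = wtransverse V.

Definition assoc_weights {n : nat} (Q : {ffun 'I_n.+1 -> nat}) (W : 'M[int]_n) : Prop :=
  exists V, associated Q W V.

Definition rowgcd {n : nat} (W : 'M[int]_n) (i : 'I_n) : int :=
  \big[gcdz/0]_j (\adj W) i j.

Definition adjgcd {n : nat} (W : 'M[int]_n) : int :=
  \big[gcdz/0]_(ij : 'I_n * 'I_n) (\adj W) ij.1 ij.2.

Definition hatW {n : nat} (W : 'M[int]_n) : 'M[rat]_n :=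
  diag_mx (\row_i ((`|\det W|)%:~R / (rowgcd W i)%:~R)) *m invmx (toQ W).

(* Main.v *)
Require Import Defs.
From HB Require Import structures.
From mathcomp Require Import all_boot all_order all_algebra ring.
Import Order.TTheory GRing.Theory Num.Theory.
Local Open Scope ring_scope.

Lemma biggcdz_abs (I : finType) (P : pred I) (F : I -> int) :
  \big[gcdz/0]_(i | P i) F i = (\big[gcdn/0%N]_(i | P i) `|F i|%N)%:Z.
Proof.
elim/big_rec2: _ => // i x y Pi ->.
by rewrite /gcdz.
Qed.

Lemma biggcdz_bezout (I : finType) (P : pred I) (F : I -> int) :
  {u : I -> int | \sum_(i | P i) u i * F i = \big[gcdz/0]_(i | P i) F i}.
Proof.
elim/big_ind: _.
- by exists (fun _ => 0); rewrite big1 // => i _; rewrite mul0r.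
- move=> x y [u Hu] [v Hv]; have [a [b Hab]] := Bezoutz x y.
  exists (fun i => a * u i + b * v i); rewrite -Hab -Hu -Hv.
  rewrite !mulr_sumr -big_split /=; apply: eq_bigr => i _.
  by rewrite mulrDl !mulrA.
- move=> i Pi; exists (fun j => (j == i)%:R).
  rewrite (bigD1 i) //= eqxx mul1r big1 ?addr0 // => j /andP[_ /negbTE ->].
  by rewrite mul0r.
Qed.

Lemma biggcdz_dvd (I : finType) (P : pred I) (F : I -> int) i :
  P i -> (\big[gcdz/0]_(j | P j) F j %| F i)%Z.
Proof. move=> Pi; rewrite biggcdz_abs dvdzE absz_nat. have := dvdnn (\big[gcdn/0%N]_(j | P j) `|F j|%N). move/dvdn_biggcdP. apply. done. Qed.

Lemma biggcdz_mul (I : finType) (P : pred I) (F : I -> int) k :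
  \big[gcdz/0]_(i | P i) (k * F i) = `|k|%:Z * \big[gcdz/0]_(i | P i) F i.
Proof.
rewrite !biggcdz_abs; congr Posz.
under eq_bigr do rewrite abszM.
by rewrite -(big_morph _ (muln_gcdr `|k|%N) (muln0 _)).
Qed.

Lemma toQ_det n (A : 'M[int]_n) : \det (toQ A) = (\det A)%:~R.
Proof. by rewrite /toQ det_map_mx. Qed.
Lemma toQ_adj n (A : 'M[int]_n) : toQ (\adj A) = \adj (toQ A).
Proof. by rewrite /toQ map_mx_adj. Qed.

Lemma key n (W : 'M[int]_n) (V : 'M[int]_(n, n.+1)) :
  Fadmissible V -> reduced_weights_vector (weightsOf V) -> toQ W = wtransverse V ->
  transverseQ (hatW W)^T (weightsOf V) = toQ W /\
  ((weightsOf V ord0)%:R = `|\det (hatW W)| :> rat /\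
   (forall i : 'I_n, (weightsOf V (lift ord0 i))%:R = (rowgcd W i)%:~R / (adjgcd W)%:~R :> rat) /\
   (lcmQ (weightsOf V))%:R = (`|\det W|)%:~R / (adjgcd W)%:~R :> rat).
Proof.
move=> [Hnz [Hg Hs]] [[Hpos Hg1] Hred] HW.
set Q := weightsOf V in Hpos Hg1 Hred HW *.
pose q i := Q (lift ord0 i).
have qpos : forall i, (0 < q i)%N by move=> i; exact: Hpos.
have qnz : forall i, (q i)%:R != 0 :> rat by move=> i; rewrite pnatr_eq0 -lt0n.
pose d := lcmQ Q.
have dpos : (0 < d)%N by rewrite /d /lcmQ; elim/big_ind: _ => // x y; rewrite lcmn_gt0 => -> ->.
have dnz : d%:R != 0 :> rat by rewrite pnatr_eq0 -lt0n.
pose A := V0 V. pose B := toQ A.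
have Bu : B \in unitmx.
  by rewrite unitmxE unitfE toQ_det intr_eq0; exact: (Hnz ord0).
pose D : 'M[rat]_n := (d%:R) *: diag_mx (\row_i ((q i)%:R)^-1).
pose X : 'M[rat]_n := (d%:R)^-1 *: diag_mx (\row_i ((q i)%:R)).
have HW' : toQ W = (invmx B)^T *m D := HW.
have DX : D *m X = 1%:M.
  rewrite /D /X -scalemxAl -scalemxAr scalerA mul_diag_mx; apply/matrixP => i j.
  rewrite !mxE; case: eqP => [->|_]; last by rewrite !mulr0.
  by rewrite !mulr1n mulfV // mul1r mulVf.
have W1 : toQ W *m (X *m B^T) = 1%:M.
  by rewrite HW' mulmxA -(mulmxA _ D) DX mulmx1 -trmx_mul mulmxV // trmx1.
have Wu : toQ W \in unitmx by case: (mulmx1_unit W1).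
have Winv : invmx (toQ W) = X *m B^T by rewrite -(mulKmx Wu (X *m B^T)) W1 mulmx1.
set dW := \det (toQ W).
have dWnz : dW != 0 by rewrite -unitfE -unitmxE.
have Hadj : forall i j, ((\adj W) i j)%:~R = dW * (d%:R^-1 * ((q i)%:R * (V j (lift ord0 i))%:~R)).
  move=> i j.
  have E : toQ (\adj W) = dW *: invmx (toQ W).
    by rewrite toQ_adj -(mulKmx Wu (\adj (toQ W))) mul_mx_adj mul_mx_scalar.
  have := congr1 (fun M : 'M[rat]_n => M i j) E; rewrite /toQ mxE => ->.
  rewrite Winv /X -scalemxAl mul_diag_mx !mxE.
  done.
have Hcol : forall i, \big[gcdz/0]_j V j (lift ord0 i) = 1.
  move=> i; set g := \big[gcdz/0]_j _.
  have -> : g = Posz `|g|%N by rewrite /g biggcdz_abs.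
  suff : (`|g| %| 1)%N by rewrite dvdn1 => /eqP ->.
  rewrite -(Hred (lift ord0 i)); apply/dvdn_biggcdP => k Hk.
  rewrite /Q ffunE -dvdzE.
  have [j' Ej _] := unlift_some Hk.
  rewrite /Vminor (expand_det_col _ j'); apply: rpred_sum => r _.
  apply: dvdz_mulr; rewrite mxE -Ej; exact: biggcdz_dvd.
have Hk : forall i, {k : int | (k%:~R = dW / d%:R * (q i)%:R) /\ (forall j, (\adj W) i j = k * V j (lift ord0 i))}.
  move=> i; have [u Hu] := biggcdz_bezout _ xpredT (fun j => V j (lift ord0 i)).
  rewrite Hcol in Hu.
  set c := dW / d%:R * (q i)%:R.
  have Hc : forall j, ((\adj W) i j)%:~R = c * (V j (lift ord0 i))%:~R.
    by move=> j; rewrite Hadj /c; ring.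
  have ek : (\sum_j u j * (\adj W) i j)%:~R = c.
    have -> : c = c * ((\sum_j u j * V j (lift ord0 i))%:~R) by rewrite Hu mulr1.
    rewrite (big_morph _ (@intrD _) (mulr0z 1)) (big_morph _ (@intrD _) (mulr0z 1)) mulr_sumr; apply: eq_bigr => j _.
    by rewrite !intrM Hc; ring.
  exists (\sum_j u j * (\adj W) i j); split => // j.
  by apply/eqP; rewrite -(eqr_int rat) intrM Hc ek.
pose k i := sval (Hk i).
have Hk1 : forall i, (k i)%:~R = dW / d%:R * (q i)%:R by move=> i; case: (svalP (Hk i)).
have Hk2 : forall i j, (\adj W) i j = k i * V j (lift ord0 i) by move=> i; case: (svalP (Hk i)).
have Hrow : forall i, rowgcd W i = `|k i|%N%:Z.
  by move=> i; rewrite /rowgcd (eq_bigr _ (fun j _ => Hk2 i j)) biggcdz_mul Hcol mulr1.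
pose mr := `|dW| / d%:R.
have Hkn : forall i, (`|k i|%N)%:R = mr * (q i)%:R :> rat.
  move=> i; rewrite natr_absz intr_norm Hk1 /mr !normrM normrV ?unitfE // !normr_nat.
  done.
have Hq1 : \big[gcdn/0%N]_(i < n) q i = 1%N.
  by rewrite -(Hred ord0) [in RHS]big_mkcond big_ord_recl /= gcd0n.
have [v Hv] := biggcdz_bezout _ xpredT (fun i : 'I_n => (q i)%:Z).
rewrite biggcdz_abs /= in Hv.
have Hv1 : \sum_i v i * (q i)%:Z = 1.
  by rewrite Hv Hq1.
pose mz := \sum_i v i * (`|k i|%N)%:Z.
have Hmz : mz%:~R = mr.
  have -> : mr = mr * ((\sum_i v i * (q i)%:Z)%:~R) by rewrite Hv1 mulr1.
  rewrite (big_morph _ (@intrD _) (mulr0z 1)) (big_morph _ (@intrD _) (mulr0z 1)) mulr_sumr; apply: eq_bigr => i _.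
  rewrite !intrM -!natr_absz Hkn /=.
  by rewrite mulrCA.
have kabs : forall i, (`|k i|%N)%:Z = mz * (q i)%:Z.
  move=> i; apply/eqP; rewrite -(eqr_int rat) intrM Hmz; apply/eqP; exact: Hkn.
have mz0 : 0 <= mz by rewrite -(ler0z rat) Hmz /mr divr_ge0.
have Hr : forall i, \big[gcdn/0%N]_j `|(\adj W) i j|%N = `|k i|%N.
  by move=> i; have := Hrow i; rewrite /rowgcd biggcdz_abs => -[].
have Hadjg : adjgcd W = mz.
  rewrite /adjgcd biggcdz_abs -(pair_bigA _ (fun i j => `|(\adj W) i j|%N)).
  under eq_bigr do rewrite Hr.
  have E : forall i, `|k i|%N = (`|mz|%N * q i)%N.
    by move=> i; have := congr1 absz (kabs i); rewrite abszM.
  under eq_bigr do rewrite E.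
  rewrite -(big_morph _ (muln_gcdr `|mz|%N) (muln0 _)) Hq1 muln1.
  exact: gez0_abs mz0.
have dWn : `|dW| != 0 by rewrite normr_eq0.
have mrnz : mr != 0 by rewrite /mr mulf_neq0 // invr_eq0.
have detW : `|\det W|%:~R = `|dW| by rewrite intr_norm -toQ_det.
have hatB : hatW W = B^T.
  have Hdiag : diag_mx (\row_i (`|\det W|%:~R / (rowgcd W i)%:~R)) = D.
    apply/matrixP => i j; rewrite /D !mxE; case: eqP => [->|_]; last by rewrite !mulr0n mulr0.
    rewrite !mulr1n Hrow -pmulrn Hkn detW /mr; field.
    by rewrite dWn qnz dnz.
  by rewrite /hatW Winv Hdiag mulmxA DX mul1mx.
split; first by rewrite hatB trmxK /transverseQ /tstar HW'.
split; first by rewrite hatB det_tr toQ_det -intr_norm /Q ffunE natr_absz.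
split.
  move=> i; rewrite Hrow Hadjg Hmz -pmulrn Hkn /q; field; exact: mrnz.
rewrite Hadjg Hmz detW /mr; field.
by rewrite dWn dnz.
Qed.

Lemma transverse_inj n (M1 M2 : 'M[rat]_n) (Q : {ffun 'I_n.+1 -> nat}) :
  (forall i, (0 < Q i)%N) -> M1 \in unitmx -> M2 \in unitmx ->
  transverseQ M1 Q = transverseQ M2 Q -> M1 = M2.
Proof.
move=> Hpos U1 U2; rewrite /transverseQ /tstar.
pose q i := Q (lift ord0 i).
have qnz : forall i, (q i)%:R != 0 :> rat by move=> i; rewrite pnatr_eq0 -lt0n; exact: Hpos.
pose d := lcmQ Q.
have dpos : (0 < d)%N by rewrite /d /lcmQ; elim/big_ind: _ => // x y; rewrite lcmn_gt0 => -> ->.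
have dnz : d%:R != 0 :> rat by rewrite pnatr_eq0 -lt0n.
pose D : 'M[rat]_n := (d%:R) *: diag_mx (\row_i ((q i)%:R)^-1).
pose X : 'M[rat]_n := (d%:R)^-1 *: diag_mx (\row_i ((q i)%:R)).
have DX : D *m X = 1%:M.
  rewrite /D /X -scalemxAl -scalemxAr scalerA mul_diag_mx; apply/matrixP => i j.
  rewrite !mxE; case: eqP => [->|_]; last by rewrite !mulr0.
  by rewrite !mulr1n mulfV // mul1r mulVf.
move=> E.
have E2 : (invmx M1)^T = (invmx M2)^T.
  by rewrite -[LHS]mulmx1 -[RHS]mulmx1 -DX !mulmxA; congr (_ *m X).
by rewrite -(invmxK M1) -(invmxK M2) (trmx_inj E2).
Qed.

Lemma V_uniq n (V V' : 'M[int]_(n, n.+1)) :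
  Fadmissible V -> Fadmissible V' -> weightsOf V = weightsOf V' ->
  wtransverse V = wtransverse V' -> V = V'.
Proof.
move=> HF HF' EQ EW; have [Hnz [_ Hs]] := HF; have [Hnz' [_ Hs']] := HF'.
have Hpos : forall i, (0 < weightsOf V i)%N.
  by move=> i; rewrite ffunE absz_gt0; exact: Hnz.
have HUn : forall U0 : 'M[int]_(n, n.+1), Fadmissible U0 -> toQ (V0 U0) \in unitmx.
  move=> U0 [HU _]; by rewrite unitmxE unitfE toQ_det intr_eq0; exact: (HU ord0).
have E0 : toQ (V0 V) = toQ (V0 V').
  apply: (@transverse_inj _ _ _ (weightsOf V) Hpos (HUn _ HF) (HUn _ HF')).
  by move: EW; rewrite /wtransverse EQ.
have Ecol : forall r i, V r (lift ord0 i) = V' r (lift ord0 i).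
  move=> r i; have := congr1 (fun M : 'M[rat]_n => M r i) E0; rewrite /toQ !mxE.
  by move/eqP; rewrite eqr_int => /eqP.
have Hsum : forall U : 'M[int]_(n, n.+1), \sum_j `|Vminor U j| *: col j U = 0 ->
   forall r, (weightsOf U ord0)%:Z * U r ord0 + \sum_i (weightsOf U (lift ord0 i))%:Z * U r (lift ord0 i) = 0.
  move=> U HU r; have := congr1 (fun M : 'cV[int]_n => M r 0) HU.
  rewrite summxE big_ord_recl !mxE /=; under eq_bigr do rewrite !mxE.
  move=> H; rewrite /weightsOf ffunE -[RHS]H; congr (_ + _); apply: eq_bigr => i _; by rewrite ffunE.
have q0 : (weightsOf V ord0)%:Z != 0 by rewrite -lt0n Hpos.
apply/matrixP => r j; case: (unliftP ord0 j) => [i ->|->]; first exact: Ecol.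
apply: (mulfI q0); apply: (@addIr _ (\sum_i (weightsOf V (lift ord0 i))%:Z * V r (lift ord0 i))).
have EQ' : forall jj, (weightsOf V jj)%:Z = (weightsOf V' jj)%:Z by move=> jj; rewrite EQ.
rewrite (Hsum _ Hs r) EQ'.
under eq_bigr do rewrite Ecol EQ'.
by rewrite (Hsum _ Hs' r).
Qed.

Theorem mainTheorem9 (n : nat) (W : 'M[int]_n) (Q : {ffun 'I_n.+1 -> nat}) :
  Padmissible W ->
  reduced_weights_vector Q ->
  assoc_weights Q W ->
  (* (a) *)
  transverseQ (hatW W)^T Q = toQ W /\
  (* (b) *)
  ((Q ord0)%:R = `|\det (hatW W)| :> rat /\
   (forall i : 'I_n, (Q (lift ord0 i))%:R = (rowgcd W i)%:~R / (adjgcd W)%:~R :> rat) /\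
   (lcmQ Q)%:R = (`|\det W|)%:~R / (adjgcd W)%:~R :> rat) /\
  (* (c) *)
  (forall Q1 Q2 : {ffun 'I_n.+1 -> nat},
     reduced_weights_vector Q1 -> assoc_weights Q1 W ->
     reduced_weights_vector Q2 -> assoc_weights Q2 W -> Q1 = Q2) /\
  (* (d) *)
  (exists! V : 'M[int]_(n, n.+1),
     Fadmissible V /\ toQ W = wtransverse V /\ Q = weightsOf V).
Proof.
move=> _ Hred [V [HF [HQ HW]]]; subst Q.
have [Ha Hb] := @key n W V HF Hred HW.
split; first exact: Ha.
split; first exact: Hb.
split.
  move=> Q1 Q2 R1 [V1 [F1 [E1 W1]]] R2 [V2 [F2 [E2 W2]]]; subst Q1 Q2.
  have [_ [B1 [B1' _]]] := @key n W V1 F1 R1 W1.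
  have [_ [B2 [B2' _]]] := @key n W V2 F2 R2 W2.
  apply/ffunP => j; case: (unliftP ord0 j) => [i ->|->]; apply/eqP; rewrite -(eqr_nat rat).
    by rewrite B1' B2'.
  by rewrite B1 B2.
exists V; split; first by split.
move=> V' [F' [W' E']].
apply: V_uniq => //; by rewrite -HW -W'.
Qed.
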